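(* For arbitrary qubit density matrices $\rho,\sigma$ (i.e. positive semidefinite $2\times 2$ complex matrices of unit trace), $$\frac{\operatorname{tr}(\rho\sigma)}{\max[\operatorname{tr}(\rho^{2}),\operatorname{tr}(\sigma^{2})]}\;\le\;\left(\operatorname{tr}\sqrt{\sqrt{\rho}\,\sigma\sqrt{\rho}}\right)^{2},$$ i.e. $\mathcal{F}_2(\rho,\sigma)\le\mathcal{F}_1(\rho,\sigma)$.
   Context: $\mathcal{F}_2(\rho,\sigma)=\operatorname{tr}(\rho\sigma)/\max[\operatorname{tr}(\rho^2),\operatorname{tr}(\sigma^2)]$ is the Hilbert–Schmidt fidelity and $\mathcal{F}_1(\rho,\sigma)=(\operatorname{tr}\sqrt{\sqrt{\rho}\sigma\sqrt{\rho}})^2$ is the Uhlmann–Jozsa fidelity; square roots of positive semidefinite matrices are the positive semidefinite square roots. *)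

(* Defs.v *)
From HB Require Import structures.
From mathcomp Require Import all_boot all_order all_algebra.
From mathcomp Require Import complex.
From Stdlib Require Import ClassicalEpsilon.
Set Implicit Arguments. Unset Strict Implicit. Unset Printing Implicit Defensive.
Import Order.TTheory GRing.Theory Num.Theory.
Local Open Scope ring_scope.

Definition adjmx (C : numClosedFieldType) m n (A : 'M[C]_(m, n)) : 'M[C]_(n, m) :=
  map_mx Num.conj (A^T).

(* positive semidefinite: Hermitian with nonnegative quadratic form
   (0 <= z in a numClosedField means z is real and nonnegative) *)
Definition psdmx (C : numClosedFieldType) n (A : 'M[C]_n) : Prop :=
  adjmx A = A /\ forall v : 'cV[C]_n, 0 <= (adjmx v *m A *m v) 0 0.

Definition density (C : numClosedFieldType) n (A : 'M[C]_n) : Prop :=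
  psdmx A /\ \tr A = 1.

(* the positive semidefinite square root (chosen by Hilbert's epsilon among
   the PSD matrices B with B * B = A; it exists and is unique when A is PSD) *)
Definition sqrtm (C : numClosedFieldType) n (A : 'M[C]_n) : 'M[C]_n :=
  epsilon (inhabits 0) (fun B : 'M[C]_n => psdmx B /\ B *m B = A).

Definition fid1 (C : numClosedFieldType) n (rho sigma : 'M[C]_n) : C :=
  (\tr (sqrtm (sqrtm rho *m sigma *m sqrtm rho))) ^+ 2.

(* Hilbert-Schmidt fidelity: tr(rho sigma) / max[tr rho^2, tr sigma^2];
   the purities are real, the max is taken of their real parts *)
Definition fid2 (R : rcfType) n (rho sigma : 'M[R[i]]_n) : R[i] :=
  \tr (rho *m sigma) /
    (Num.max (complex.Re (\tr (rho *m rho))) (complex.Re (\tr (sigma *m sigma))))%:C%C.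

(* Main.v *)
Require Import Defs.
From mathcomp Require Import all_boot all_order all_algebra.
From mathcomp Require Import complex ring lra.
From Stdlib Require Import ClassicalEpsilon.
Import Order.TTheory GRing.Theory Num.Theory.
Set Implicit Arguments. Unset Strict Implicit. Unset Printing Implicit Defensive.
Local Open Scope ring_scope.

Lemma ord2P (i : 'I_2) : i = 0 \/ i = 1.
Proof. case: i => [[|[|//]]] Hi; [left|right]; exact/val_inj. Qed.

Section M2.
Variable T : comNzRingType.
Lemma tr2 (A : 'M[T]_2) : \tr A = A 0 0 + A 1 1.
Proof.
rewrite /mxtrace !big_ord_recl big_ord0 addr0.
by have -> : lift ord0 ord0 = 1 :> 'I_2 by apply/val_inj.
Qed.
Lemma mul2 m n (A : 'M[T]_(m,2)) (B : 'M[T]_(2,n)) i j : (A *m B) i j = A i 0 * B 0 j + A i 1 * B 1 j.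
Proof.
rewrite !mxE !big_ord_recl big_ord0 addr0.
by have -> : lift ord0 ord0 = 1 :> 'I_2 by apply/val_inj.
Qed.
Lemma eq2 (A B : 'M[T]_2) : A 0 0 = B 0 0 -> A 0 1 = B 0 1 -> A 1 0 = B 1 0 -> A 1 1 = B 1 1 -> A = B.
Proof.
move=> h1 h2 h3 h4; apply/matrixP => i j.
by case: (ord2P i) => ->; case: (ord2P j) => ->.
Qed.
Lemma det2 (A : 'M[T]_2) : \det A = A 0 0 * A 1 1 - A 0 1 * A 1 0.
Proof.
rewrite (expand_det_row _ 0) !big_ord_recl big_ord0 /cofactor /=.
rewrite !det_mx11 !mxE /=.
have -> : lift ord0 ord0 = 1 :> 'I_2 by apply/val_inj.
have -> : lift 1 ord0 = 0 :> 'I_2 by apply/val_inj.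
rewrite /= expr0 expr1; ring.
Qed.
End M2.

Lemma quad2 (C : numClosedFieldType) (A : 'M[C]_2) (v : 'cV[C]_2) :
 (adjmx v *m A *m v) 0 0 = (v 0 0)^* * (A 0 0 * v 0 0 + A 0 1 * v 1 0) + (v 1 0)^* * (A 1 0 * v 0 0 + A 1 1 * v 1 0).
Proof.
rewrite -mulmxA mul2 !mul2 /adjmx !mxE //.
Qed.

Definition vec2 (C : numClosedFieldType) (x y : C) : 'cV[C]_2 :=
  \col_(i < 2) (if i == 0 then x else y).

Lemma vec2E0 (C : numClosedFieldType) (x y : C) : vec2 x y 0 0 = x.
Proof. by rewrite mxE. Qed.
Lemma vec2E1 (C : numClosedFieldType) (x y : C) : vec2 x y 1 0 = y.
Proof. by rewrite mxE. Qed.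

Section R.
Variable R : rcfType.
Local Notation C := (R[i]).

Lemma conjE (a b : R) : Num.conj (a +i* b)%C = (a -i* b)%C.
Proof. reflexivity. Qed.

Lemma quadR (A : 'M[C]_2) (a d br bi x1 x2 y1 y2 : R) :
  A 0 0 = a%:C%C -> A 1 1 = d%:C%C -> A 0 1 = (br +i* bi)%C -> A 1 0 = (br -i* bi)%C ->
  0 <= (adjmx (vec2 (x1 +i* x2)%C (y1 +i* y2)%C) *m A *m vec2 (x1 +i* x2)%C (y1 +i* y2)%C) 0 0 ->
  0 <= x1 * (a * x1 + (br * y1 - bi * y2)) + x2 * (a * x2 + (br * y2 + bi * y1)) +
    (y1 * (br * x1 + bi * x2 + d * y1) + y2 * (br * x2 - bi * x1 + d * y2)).
Proof.
move=> h1 h2 h3 h4.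
rewrite quad2 !vec2E0 !vec2E1 h1 h2 h3 h4 !conjE.
by simpc => /andP[_].
Qed.

Lemma psd2 (A : 'M[C]_2) : psdmx A -> exists a d br bi : R,
  [/\ A 0 0 = a%:C%C, A 1 1 = d%:C%C, A 0 1 = (br +i* bi)%C, A 1 0 = (br -i* bi)%C &
   [/\ 0 <= a, 0 <= d & br^+2 + bi^+2 <= a * d]].
Proof.
move=> [H Q].
have H' i j : (A j i)^* = A i j.
  by have := congr1 (fun M : 'M[C]_2 => M i j) H; rewrite !mxE.
case E00: (A 0 0) => [a a']. case E11: (A 1 1) => [d d']. case E01: (A 0 1) => [br bi].
have a'0 : a' = 0.
  have := H' 0 0; rewrite E00 conjE => /eqP; rewrite eq_complex /= => /andP[_ /eqP]. lra.
have d'0 : d' = 0.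
  have := H' 1 1; rewrite E11 conjE => /eqP; rewrite eq_complex /= => /andP[_ /eqP]. lra.
subst a' d'.
have E10 : A 1 0 = (br -i* bi)%C by rewrite -H' E01.
exists a, d, br, bi; split => //.
have q := fun x1 x2 y1 y2 => @quadR A a d br bi x1 x2 y1 y2 E00 E11 E01 E10 (Q _).
have q1 := q 1 0 0 0. have q2 := q 0 0 1 0.
have q3 := q d 0 (-br) bi. have q4 := q (-br) (-bi) a 0. have q5 := q (-br) (-bi) 1 0.
have [hs|hs] := boolP (0 < a + d).
  split; nra.
split; nra.
Qed.

Lemma adjmxM m n p (A : 'M[C]_(m,n)) (B : 'M[C]_(n,p)) : adjmx (A *m B) = adjmx B *m adjmx A.
Proof. by rewrite /adjmx trmx_mul map_mxM. Qed.

Lemma herm (A : 'M[C]_2) : psdmx A -> forall i j, (A j i)^* = A i j.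
Proof.
move=> [H _] i j.
by have := congr1 (fun M : 'M[C]_2 => M i j) H; rewrite !mxE.
Qed.

Lemma psd0 : psdmx (0 : 'M[C]_2).
Proof.
split; first by apply/matrixP => i j; rewrite !mxE rmorph0.
by move=> v; rewrite mulmx0 mul0mx mxE.
Qed.

Lemma detR (A : 'M[C]_2) (a d br bi : R) :
  A 0 0 = a%:C%C -> A 1 1 = d%:C%C -> A 0 1 = (br +i* bi)%C -> A 1 0 = (br -i* bi)%C ->
  \det A = (a * d - (br^+2 + bi^+2))%:C%C.
Proof.
move=> h1 h2 h3 h4; rewrite det2 h1 h2 h3 h4.
apply/eqP; rewrite eq_complex /=; apply/andP; split; apply/eqP; simpl; ring.
Qed.

Lemma trR (A : 'M[C]_2) (a d : R) :
  A 0 0 = a%:C%C -> A 1 1 = d%:C%C -> \tr A = (a + d)%:C%C.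
Proof. by move=> h1 h2; rewrite tr2 h1 h2 rmorphD. Qed.

Lemma sqrt_ex (A : 'M[C]_2) : psdmx A -> exists B, psdmx B /\ B *m B = A.
Proof.
move=> hA; have [a [d [br [bi [E00 E11 E01 E10 [ha hd hN]]]]]] := psd2 hA.
have hdet := detR E00 E11 E01 E10.
set s := Num.sqrt (a*d - (br^+2+bi^+2)).
set t := Num.sqrt (a + d + 2 * s).
have s0 : 0 <= s := sqrtr_ge0 _.
have ss : s^+2 = a*d - (br^+2+bi^+2) by rewrite sqr_sqrtr // subr_ge0.
have [t0|tn0] := eqVneq t 0.
  have h0 : a + d + 2 * s <= 0 by rewrite -sqrtr_eq0 -/t t0.
  have a0 : a = 0 by lra.
  have d0 : d = 0 by lra.
  have br0 : br = 0 by nra.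
  have bi0 : bi = 0 by nra.
  exists 0; split; first exact: psd0.
  rewrite mulmx0; apply: eq2; rewrite ?mxE ?E00 ?E11 ?E01 ?E10 ?a0 ?d0 ?br0 ?bi0 ?oppr0 //.
have t0 : 0 < t by rewrite lt_def tn0 sqrtr_ge0.
set u := t^-1.
have E2 : u^+2 * (a + d + 2 * s) = 1.
  rewrite -[a + d + 2 * s]sqr_sqrtr; last lra.
  by rewrite -/t /u exprVn mulVf // sqrf_eq0.
have E2C : (u%:C%C)^+2 * (A 0 0 + A 1 1 + 2 * s%:C%C) = 1 :> C.
  rewrite E00 E11 -[RHS](rmorph1 (real_complex R)) -E2.
  by rewrite rmorphM rmorphXn !rmorphD rmorphM rmorph_nat.
have ssC : (s%:C%C)^+2 = A 0 0 * A 1 1 - A 0 1 * A 1 0 :> C.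
  by rewrite -det2 hdet -ss rmorphXn.
have u0 : 0 <= u by rewrite invr_ge0 ltW.
exists ((u%:C%C) *: (A + (s%:C%C)%:M)); split.
  split.
    apply/matrixP => i j; rewrite !mxE rmorphM rmorphD rmorphMn /= (herm hA).
    by rewrite !geC0_conj ?ler0c // eq_sym.
  move=> v; rewrite quad2 !mxE /=.
  have hQ := (hA.2 v); rewrite quad2 in hQ.
  set Q := (X in 0 <= X) in hQ.
  rewrite mulr1n !mulr0n !addr0.
  have -> : (v 0 0)^* * (u%:C%C * (A 0 0 + s%:C%C) * (v 0 0) + u%:C%C * A 0 1 * (v 1 0)) +
     (v 1 0)^* * (u%:C%C * A 1 0 * (v 0 0) + u%:C%C * (A 1 1 + s%:C%C) * (v 1 0)) =
     u%:C%C * (Q + s%:C%C * ((v 0 0) * (v 0 0)^* + (v 1 0) * (v 1 0)^*)) by rewrite /Q; ring.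
  rewrite mulr_ge0 ?ler0c // addr_ge0 // mulr_ge0 ?ler0c // addr_ge0 //;
    exact: mul_conjC_ge0.
rewrite -scalemxAl -scalemxAr scalerA.
have hE : forall L z : C, L - z * ((u%:C%C)^+2 * (A 0 0 + A 1 1 + 2 * s%:C%C)) = 0 -> L = z.
  by move=> L z; rewrite E2C mulr1 => /eqP; rewrite subr_eq0 => /eqP.
apply: eq2; rewrite mxE mul2 !mxE /= ?mulr1n ?mulr0n ?addr0; apply: hE.
- transitivity ((u%:C%C)^+2 * ((s%:C%C)^+2 - (A 0 0 * A 1 1 - A 0 1 * A 1 0))); first ring.
  by rewrite ssC subrr mulr0.
- ring.
- ring.
- transitivity ((u%:C%C)^+2 * ((s%:C%C)^+2 - (A 0 0 * A 1 1 - A 0 1 * A 1 0))); first ring.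
  by rewrite ssC subrr mulr0.
Qed.

Lemma sqrtm_spec (A : 'M[C]_2) : psdmx A -> psdmx (sqrtm A) /\ sqrtm A *m sqrtm A = A.
Proof. move=> hA; exact: (@epsilon_spec _ (inhabits 0) (fun B : 'M[C]_2 => psdmx B /\ B *m B = A) (sqrt_ex hA)). Qed.

Lemma trsq (B : 'M[C]_2) : (\tr B)^+2 = \tr (B *m B) + 2 * \det B.
Proof. rewrite !tr2 !mul2 det2; ring. Qed.

Lemma sqrtm_tr (A : 'M[C]_2) : psdmx A -> exists D : R,
  [/\ 0 <= D, (\tr (sqrtm A))^+2 = \tr A + 2 * D%:C%C & (D%:C%C)^+2 = \det A].
Proof.
move=> hA; have [hB hBB] := sqrtm_spec hA.
have [a [d [br [bi [E00 E11 E01 E10 [ha hd hN]]]]]] := psd2 hB.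
have hdet := detR E00 E11 E01 E10.
exists (a * d - (br^+2 + bi^+2)); split.
- lra.
- by rewrite trsq hBB hdet.
- by rewrite -hdet expr2 -det_mulmx hBB.
Qed.

Lemma psd_conj (S P : 'M[C]_2) : psdmx S -> psdmx P -> psdmx (S *m P *m S).
Proof.
move=> [hS _] [hP qP]; split.
  by rewrite !adjmxM hS hP mulmxA.
move=> v.
have -> : adjmx v *m (S *m P *m S) *m v = adjmx (S *m v) *m P *m (S *m v).
  by rewrite adjmxM hS !mulmxA.
exact: qP.
Qed.

Lemma sq_le (x y : R) : 0 <= x -> 0 <= y -> x * x <= y ^+ 2 -> x <= y.
Proof. move=> hx hy h; nra. Qed.

Lemma real_final (a1 d1 b1r b1i a2 d2 b2r b2i D : R) :
  a1 + d1 = 1 -> a2 + d2 = 1 -> 0 <= a1 -> 0 <= d1 -> 0 <= a2 -> 0 <= d2 ->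
  b1r^+2 + b1i^+2 <= a1 * d1 -> b2r^+2 + b2i^+2 <= a2 * d2 -> 0 <= D ->
  D^+2 = (a1 * d1 - (b1r^+2 + b1i^+2)) * (a2 * d2 - (b2r^+2 + b2i^+2)) ->
  (a1 * a2 + d1 * d2 + 2 * (b1r * b2r + b1i * b2i)) /
    Num.max (a1^+2 + d1^+2 + 2 * (b1r^+2 + b1i^+2)) (a2^+2 + d2^+2 + 2 * (b2r^+2 + b2i^+2))
  <= a1 * a2 + d1 * d2 + 2 * (b1r * b2r + b1i * b2i) + 2 * D.
Proof.
move=> e1 e2 ha1 hd1 ha2 hd2 hN1 hN2 hD hD2.
set P := a1 * a2 + d1 * d2 + 2 * (b1r * b2r + b1i * b2i).
set pr := a1^+2 + d1^+2 + 2 * (b1r^+2 + b1i^+2).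
set ps := a2^+2 + d2^+2 + 2 * (b2r^+2 + b2i^+2).
set X1 := a1 * d1 - (b1r^+2 + b1i^+2).
set X2 := a2 * d2 - (b2r^+2 + b2i^+2).
have hX1 : 0 <= X1 by rewrite /X1; lra.
have hX2 : 0 <= X2 by rewrite /X2; lra.
have epr : pr = 1 - 2 * X1.
  rewrite /pr /X1; have -> : d1 = 1 - a1 by lra. ring.
have eps : ps = 1 - 2 * X2.
  rewrite /ps /X2; have -> : d2 = 1 - a2 by lra. ring.
have hP : 2 * P <= pr + ps.
  have : 0 <= (a1 - a2)^+2 + (d1 - d2)^+2 + 2 * ((b1r - b2r)^+2 + (b1i - b2i)^+2).
    by rewrite addr_ge0 ?mulr_ge0 ?addr_ge0 ?sqr_ge0.
  rewrite /P /pr /ps; nra.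
set m := Num.max pr ps.
have [hm1 hm2 hm3] : [/\ pr <= m, ps <= m & (m = pr \/ m = ps)].
  rewrite /m; case: (leP pr ps) => h; split; try lra; by [left|right].
have hD' : 1 - m <= 2 * D.
  case: hm3 => hm; rewrite hm.
  - have hX : X1 <= X2 by lra.
    have : X1 * X1 <= D^+2 by rewrite hD2; apply: ler_wpM2l.
    move/sq_le => /(_ hX1 hD); lra.
  - have hX : X2 <= X1 by lra.
    have : X2 * X2 <= D^+2 by rewrite hD2 [X1 * X2]mulrC; apply: ler_wpM2l.
    move/sq_le => /(_ hX2 hD); lra.
have hq1 : 4 * X1 <= 1.
  rewrite /X1; have -> : d1 = 1 - a1 by lra.
  have := sqr_ge0 (2 * a1 - 1); nra.
have m0 : 0 < m by lra.
have m1 : m <= 1 by case: hm3 => ->; lra.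
rewrite ler_pdivrMr //.
nra.
Qed.
End R.

Unset Implicit Arguments.
Set Strict Implicit.

Theorem corollary1 (R : rcfType) (rho sigma : 'M[R[i]]_2) :
  density rho -> density sigma ->
  fid2 rho sigma <= fid1 rho sigma.
Proof.
move=> [hr trr] [hs trs].
have [hS hSS] := sqrtm_spec hr.
set S := sqrtm rho in hS hSS.
have hM := psd_conj hS hs.
have [D [D0 HD1 HD2]] := sqrtm_tr hM.
have trM : \tr (S *m sigma *m S) = \tr (rho *m sigma).
  by rewrite mxtrace_mulC mulmxA hSS.
have detM : \det (S *m sigma *m S) = \det rho * \det sigma.
  by rewrite !det_mulmx -hSS det_mulmx; ring.
have -> : fid1 rho sigma = \tr (rho *m sigma) + 2 * D%:C%C.
  by rewrite /fid1 -/S HD1 trM.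
have [a1 [d1 [b1r [b1i [E00 E11 E01 E10 [ha1 hd1 hN1]]]]]] := psd2 hr.
have [a2 [d2 [b2r [b2i [F00 F11 F01 F10 [ha2 hd2 hN2]]]]]] := psd2 hs.
have e1 : a1 + d1 = 1.
  by apply: (@complexI R); rewrite rmorph1 -trr (trR E00 E11).
have e2 : a2 + d2 = 1.
  by apply: (@complexI R); rewrite rmorph1 -trs (trR F00 F11).
have hD2 : D^+2 = (a1 * d1 - (b1r^+2 + b1i^+2)) * (a2 * d2 - (b2r^+2 + b2i^+2)).
  apply: (@complexI R).
  by rewrite rmorphXn HD2 detM (detR E00 E11 E01 E10) (detR F00 F11 F01 F10) rmorphM.
have trP : \tr (rho *m sigma) = (a1 * a2 + d1 * d2 + 2 * (b1r * b2r + b1i * b2i))%:C%C.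
  rewrite tr2 !mul2 E00 E11 E01 E10 F00 F11 F01 F10.
  apply/eqP; rewrite eq_complex /=; apply/andP; split; apply/eqP; simpl; ring.
have trr2 : \tr (rho *m rho) = (a1^+2 + d1^+2 + 2 * (b1r^+2 + b1i^+2))%:C%C.
  rewrite tr2 !mul2 E00 E11 E01 E10.
  apply/eqP; rewrite eq_complex /=; apply/andP; split; apply/eqP; simpl; ring.
have trs2 : \tr (sigma *m sigma) = (a2^+2 + d2^+2 + 2 * (b2r^+2 + b2i^+2))%:C%C.
  rewrite tr2 !mul2 F00 F11 F01 F10.
  apply/eqP; rewrite eq_complex /=; apply/andP; split; apply/eqP; simpl; ring.
rewrite /fid2 trP trr2 trs2 /=.
rewrite -fmorph_div -(rmorph_nat (real_complex R) 2) -rmorphM -rmorphD lecR.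
exact: real_final.
Qed.
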